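(* Let $a_1,a_2,a_3,a_4$ be nonzero integers. There is a constant $C$ (depending at most on $a_1,\dots,a_4$) such that for every $n$ and every Sidon set $X\subseteq\{1,\dots,n\}$, the number of $4$-tuples $(x_1,x_2,x_3,x_4)\in X^4$ with $a_1x_1+a_2x_2+a_3x_3+a_4x_4=0$ is at most $Cn$.
   Context: A set $X$ of integers is a Sidon set if it has no nontrivial solution to $x_1+x_2=x_3+x_4$ with $x_i\in X$, where a solution is trivial if $(x_1,x_2)=(x_3,x_4)$ or $(x_1,x_2)=(x_4,x_3)$. *)

(* Defs.v *)
From mathcomp Require Import all_boot all_order all_algebra.
Set Implicit Arguments. Unset Strict Implicit. Unset Printing Implicit Defensive.
Import Order.TTheory GRing.Theory Num.Theory.

(* A finite set of positive integers is represented by a duplicate-free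
   sequence of naturals. *)
Definition sidon (X : seq nat) : Prop :=
  forall x1 x2 x3 x4, x1 \in X -> x2 \in X -> x3 \in X -> x4 \in X ->
    (x1 + x2 = x3 + x4)%N ->
    (x1 = x3 /\ x2 = x4) \/ (x1 = x4 /\ x2 = x3).

Definition nsol (a1 a2 a3 a4 : int) (X : seq nat) : nat :=
  size [seq t <- (flatten [seq flatten [seq [seq ((x1, x2), (x3, x4)) | x3 <- X, x4 <- X] | x2 <- X] | x1 <- X])
       | let: ((x1, x2), (x3, x4)) := t in
         (a1 * x1%:Z + a2 * x2%:Z + a3 * x3%:Z + a4 * x4%:Z == 0)%R].

(* Main.v *)
Require Import Defs.
From mathcomp Require Import all_boot all_order all_algebra.
From mathcomp Require Import zify.
Import Order.TTheory GRing.Theory Num.Theory.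

Lemma sum_bool (T : Type) (s : seq T) (P : pred T) :
  \sum_(i <- s) (P i : nat) = count P s.
Proof. elim: s => [|x s IH]; first by rewrite big_nil. by rewrite big_cons IH. Qed.

Lemma amo (T : eqType) (s : seq T) (P : pred T) : uniq s ->
  (forall x y, x \in s -> y \in s -> P x -> P y -> x = y) -> count P s <= 1.
Proof.
elim: s => [|x s IH] //= /andP [xs us] H.
case Px: (P x) => /=.
  suff -> : count P s = 0 by [].
  apply/eqP; rewrite -leqn0 leqNgt -has_count.
  apply/hasPn => y ys; apply/negP => Py.
  have := H x y; rewrite !inE eqxx ys orbT => /(_ isT isT Px Py) exy.
  by move: xs; rewrite exy ys.
rewrite add0n; apply: IH => // y z ys zs Py Pz; apply: H => //; by rewrite inE ?ys ?zs orbT.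
Qed.

Lemma sel (U : eqType) (V : seq U) (u : U) (G : U -> nat) :
  uniq V -> u \in V -> \sum_(v <- V) (u == v) * G v = G u.
Proof.
move=> uV uin; rewrite (bigD1_seq u) //= eqxx mul1n big1 ?addn0 //.
by move=> v; rewrite eq_sym => /negbTE ->.
Qed.

Lemma cs (T : eqType) (P Q : seq T) (f h : T -> int) :
  2 * \sum_(p <- P) \sum_(q <- Q) (f p == h q)
  <= \sum_(p <- P) \sum_(q <- P) (f p == f q) + \sum_(p <- Q) \sum_(q <- Q) (h p == h q).
Proof.
set V := undup (map f P ++ map h Q).
have uV : uniq V by apply: undup_uniq.
set A := fun v => \sum_(p <- P) (f p == v) : nat.
set B := fun v => \sum_(q <- Q) (h q == v) : nat.
have key : forall (C : seq T) (g : T -> int) (D : int -> nat),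
    (forall p, p \in C -> g p \in V) ->
    \sum_(p <- C) D (g p) = \sum_(v <- V) (\sum_(p <- C) (g p == v)) * D v.
  move=> C g D HC.
  under [RHS]eq_bigr => v _ do rewrite big_distrl /=.
  rewrite exchange_big /=; apply: eq_big_seq => p pC.
  by rewrite sel // HC.
have PV : forall p, p \in P -> f p \in V.
  by move=> p pP; rewrite mem_undup mem_cat map_f.
have QV : forall p, p \in Q -> h p \in V.
  by move=> p pP; rewrite mem_undup mem_cat map_f ?orbT.
rewrite (key P f (fun v => \sum_(q <- Q) (v == h q))) //.
rewrite (key P f (fun v => \sum_(q <- P) (v == f q))) //.
rewrite (key Q h (fun v => \sum_(q <- Q) (v == h q))) //.
rewrite big_distrr -big_split /=; apply: leq_sum => v _.
have -> : \sum_(q <- Q) (v == h q) = B v by apply: eq_bigr => q _; rewrite eq_sym.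
have -> : \sum_(q <- P) (v == f q) = A v by apply: eq_bigr => q _; rewrite eq_sym.
rewrite -/(A v) -/(B v).
by have := nat_Cauchy (A v) (B v); rewrite !expnS !expn0 !muln1 => -[].
Qed.

Lemma leq_sum_seq (I : eqType) (r : seq I) (E1 E2 : I -> nat) :
  (forall i, i \in r -> E1 i <= E2 i) ->
  \sum_(i <- r) E1 i <= \sum_(i <- r) E2 i.
Proof. by move=> H; rewrite big_seq [X in _ <= X]big_seq; apply: leq_sum. Qed.

Lemma sum_cst (I : Type) (r : seq I) (c : nat) : \sum_(i <- r) c = size r * c.
Proof. elim: r => [|x r IH]; first by rewrite big_nil. rewrite big_cons IH /=. lia. Qed.

Definition pr (X : seq nat) := [seq (x, y) | x <- X, y <- X].

Lemma amo2 (X : seq nat) (P : pred (nat * nat)) : uniq X ->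
  (forall x y x' y', x \in X -> y \in X -> x' \in X -> y' \in X ->
     P (x, y) -> P (x', y') -> x = x' /\ y = y') ->
  \sum_(x <- X) \sum_(y <- X) (P (x, y) : nat) <= 1.
Proof.
move=> uX H.
rewrite -(big_allpairs (F := fun p => nat_of_bool (P p))) sum_bool.
apply: amo.
  by apply: allpairs_uniq => // -[a b] [c d] _ _.
move=> p q /allpairsP [[x y] [/= xX yX ->]] /allpairsP [[x' y'] [/= xX' yX' ->]] Pp Pq.
by have [-> ->] := H _ _ _ _ xX yX xX' yX' Pp Pq.
Qed.


Lemma Ebound (a b : int) (X : seq nat) : a != 0%R -> b != 0%R -> uniq X -> sidon X ->
  \sum_(p <- pr X) \sum_(q <- pr X)
     ((a * p.1%:Z + b * p.2%:Z)%R == (a * q.1%:Z + b * q.2%:Z)%R)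
  <= 2 * (size X * size X).
Proof.
move=> a0 b0 uX sX.
set k := size X.
have -> : \sum_(p <- pr X) \sum_(q <- pr X)
     ((a * p.1%:Z + b * p.2%:Z)%R == (a * q.1%:Z + b * q.2%:Z)%R)
   = \sum_(x1 <- X) \sum_(y1 <- X) \sum_(x2 <- X) \sum_(y2 <- X)
     ((a * x1%:Z + b * x2%:Z)%R == (a * y1%:Z + b * y2%:Z)%R).
  rewrite big_allpairs; apply: eq_bigr => x1 _.
  under eq_bigr => x2 _ do rewrite big_allpairs.
  by rewrite exchange_big.
apply: (@leq_trans (\sum_(x1 <- X) \sum_(y1 <- X) ((x1 == y1) * k + 1))).
  apply: leq_sum_seq => x1 x1X; apply: leq_sum_seq => y1 y1X.
  have [<-|ne] := eqVneq x1 y1.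
    rewrite mul1n; apply: leq_trans (leq_addr _ _).
    rewrite /k -sum1_size; apply: leq_sum => x2 _.
    rewrite sum_bool; apply: amo => // y y' _ _ /eqP H1 /eqP H2.
    have : (b * (y%:Z - y'%:Z) = 0)%R by lia.
    by move/eqP; rewrite mulf_eq0 (negbTE b0) /= subr_eq0 => /eqP [].
  rewrite mul0n add0n.
  apply: (@amo2 X (fun p => (a * x1%:Z + b * p.1%:Z)%R == (a * y1%:Z + b * p.2%:Z)%R)) => //.
  move=> x2 y2 x2' y2' x2X y2X x2X' y2X' /= /eqP H1 /eqP H2.
  have e1 : (b * (x2%:Z - y2%:Z) = a * (y1%:Z - x1%:Z))%R by lia.
  have e2 : (b * (x2'%:Z - y2'%:Z) = a * (y1%:Z - x1%:Z))%R by lia.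
  have nz : (a * (y1%:Z - x1%:Z) != 0)%R.
    by rewrite mulf_eq0 (negbTE a0) /= subr_eq0; apply/eqP => -[] /esym /eqP; rewrite (negbTE ne).
  have e3 : (x2%:Z - y2%:Z = x2'%:Z - y2'%:Z)%R.
    apply/eqP; rewrite -subr_eq0; apply/eqP.
    have : (b * ((x2%:Z - y2%:Z) - (x2'%:Z - y2'%:Z)) = 0)%R by rewrite mulrBr e1 e2 subrr.
    by move/eqP; rewrite mulf_eq0 (negbTE b0) /= => /eqP.
  have nd : x2 != y2.
    apply/eqP => exy; move: nz; rewrite -e1 exy subrr mulr0 eqxx //.
  have e4 : x2 + y2' = x2' + y2 by lia.
  case: (sX _ _ _ _ x2X y2X' x2X' y2X e4) => [[-> ->] //|[exy _]].
  by move: nd; rewrite exy eqxx.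
apply: (@leq_trans (\sum_(x1 <- X) (2 * k))).
  apply: leq_sum_seq => x1 x1X.
  rewrite big_split /= sum1_size -big_distrl /=.
  have : \sum_(i <- X) (x1 == i) <= 1.
    rewrite sum_bool; apply: amo => // y y' _ _ /eqP <- /eqP <- //.
  rewrite -/k; move: (\sum_(i <- X) (x1 == i)) => c; nia.
by rewrite sum_cst -/k; lia.
Qed.

Lemma uniq_pr X : uniq X -> uniq (pr X).
Proof. by move=> uX; apply: allpairs_uniq => // -[a b] [c d] _ _. Qed.

Lemma Dbound (X : seq nat) (n : nat) : uniq X -> (forall x, x \in X -> 1 <= x <= n) ->
  sidon X -> \sum_(x <- X) \sum_(y <- X) (x != y) <= (2 * n).+1.
Proof.
move=> uX bX sX.
rewrite -(@big_allpairs _ _ _ _ _ X X (fun p => nat_of_bool (p.1 != p.2))) -/(pr X).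
set V := iota 0 (2 * n).+1.
set g := fun p : nat * nat => p.1 + n - p.2.
have -> : \sum_(p <- pr X) (p.1 != p.2 : nat)
    = \sum_(p <- pr X) \sum_(v <- V) (g p == v) * (p.1 != p.2).
  apply: eq_big_seq => p /allpairsP [[x y] [/= xX yX ->]].
  rewrite sel ?iota_uniq //= mem_iota /g /=.
  have := bX _ xX; have := bX _ yX; lia.
rewrite exchange_big /= -[X in _ <= X](size_iota 0) -sum1_size.
apply: leq_sum => v _.
under eq_bigr => p _ do rewrite mulnb.
rewrite sum_bool; apply: amo; first exact: uniq_pr.
move=> p q /allpairsP [[x y] [/= xX yX ->]] /allpairsP [[x' y'] [/= xX' yX' ->]].
rewrite /g /= => /andP [/eqP e1 ne1] /andP [/eqP e2 ne2].
have := bX _ xX; have := bX _ yX; have := bX _ xX'; have := bX _ yX' => b1 b2 b3 b4.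
have e : x + y' = x' + y by lia.
case: (sX _ _ _ _ xX yX' xX' yX e) => [[-> ->] //|[exy _]].
by move: ne1; rewrite exy eqxx.
Qed.

Lemma cfm (S T : Type) (P : pred T) (f : S -> seq T) (s : seq S) :
  count P (flatten (map f s)) = \sum_(x <- s) count P (f x).
Proof.
elim: s => [|x s IH]; first by rewrite big_nil.
by rewrite big_cons /= count_cat IH.
Qed.

Lemma nsolE a1 a2 a3 a4 X : nsol a1 a2 a3 a4 X =
  \sum_(p <- pr X) \sum_(q <- pr X)
    ((a1 * p.1%:Z + a2 * p.2%:Z)%R == (- (a3 * q.1%:Z + a4 * q.2%:Z))%R).
Proof.
rewrite /nsol size_filter cfm big_allpairs.
apply: eq_bigr => x1 _.
rewrite cfm; apply: eq_bigr => x2 _.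
rewrite cfm big_allpairs; apply: eq_bigr => x3 _.
rewrite count_map -sum_bool; apply: eq_bigr => x4 _ /=.
congr (nat_of_bool _); by apply/eqP/eqP => H; lia.
Qed.

Theorem lemma1p18 (a1 a2 a3 a4 : int) :
  a1 != 0%R -> a2 != 0%R -> a3 != 0%R -> a4 != 0%R ->
  exists C : nat, forall (n : nat) (X : seq nat),
    uniq X -> (forall x, x \in X -> (1 <= x <= n)%N) -> sidon X ->
    (nsol a1 a2 a3 a4 X <= C * n)%N.
Proof.
move=> h1 h2 h3 h4; exists 14 => n X uX bX sX.
have hN := cs _ (pr X) (pr X) (fun p => (a1 * p.1%:Z + a2 * p.2%:Z)%R)
               (fun q => (- (a3 * q.1%:Z + a4 * q.2%:Z))%R).
rewrite -nsolE in hN.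
have E1 := Ebound _ _ _ h1 h2 uX sX.
have E2 := Ebound _ _ _ h3 h4 uX sX.
have E2' : \sum_(p <- pr X) \sum_(q <- pr X)
   ((- (a3 * p.1%:Z + a4 * p.2%:Z))%R == (- (a3 * q.1%:Z + a4 * q.2%:Z))%R)
   <= 2 * (size X * size X).
  by under eq_bigr => p _ do under eq_bigr => q _ do rewrite eqr_opp.
have hk : size X * size X <= size X + (2 * n).+1.
  apply: (@leq_trans (\sum_(x <- X) \sum_(y <- X) (x == y) + \sum_(x <- X) \sum_(y <- X) (x != y))).
    rewrite -big_split -sum_cst; apply: leq_sum => x _.
    rewrite -big_split -sum1_size /=; apply: leq_sum => y _.
    by case: (x == y).
  apply: leq_add; last exact: Dbound.
  rewrite -sum1_size; apply: leq_sum => x _.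
  by rewrite sum_bool; apply: amo => // y y' _ _ /eqP <- /eqP <-.
have h2N : 2 * nsol a1 a2 a3 a4 X <= 4 * (size X * size X).
  apply: leq_trans hN _; apply: leq_trans (leq_add E1 E2') _; lia.
clear hN E1 E2 E2'.
case: n bX hk => [|n] bX hk.
  case: X uX bX sX h2N hk => [|x X] uX bX sX h2N hk.
    by move: h2N; rewrite /= muln0; lia.
  by have := bX x; rewrite inE eqxx => /(_ isT); lia.
move: (nsol _ _ _ _ _) (size X) h2N hk => N k h2N hk.
have hk2 : k <= (2 * n.+1).+2.
  case: k h2N hk => [|[|k]] h2N hk; try lia.
move: h2N hk; move: (k * k) => K; lia.
Qed.
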